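(* Let $P\subseteq\mathbb{C}$ be a finitely generated field extension of $\mathbb{Q}$ and $a_1,\dots,a_{r+1}\in\mathbb{C}^\times$. If $\{a_1,\dots,a_r,a_{r+1}\}$ is simple in $P_{r+1}=P(a_1,\dots,a_{r+1})$, then $\{a_1,\dots,a_r\}$ is simple in $P_r=P(a_1,\dots,a_r)$.
   Context: For a field $K$, a tuple $\{c_1,\dots,c_k\}\subseteq K^{\times}$ is simple in $K$ if it is multiplicatively independent ($c_1^{n_1}\cdots c_k^{n_k}=1$ with $n_i\in\mathbb{Z}$ only if all $n_i=0$) and the multiplicative subgroup $\langle c_1,\dots,c_k\rangle$ it generates is pure in $K^{\times}$ (whenever $x^n=c$, $c\in\langle c_1,\dots,c_k\rangle$, $n\ge1$, has a solution in $K^\times$, it has one in $\langle c_1,\dots,c_k\rangle$). *)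

(* Defs.v *)
From mathcomp Require Import all_boot all_order all_algebra.
From mathcomp Require Import complex reals.
Set Implicit Arguments. Unset Strict Implicit. Unset Printing Implicit Defensive.
Import Order.TTheory GRing.Theory Num.Theory.
Local Open Scope ring_scope.

Section Defs.
Variable F : fieldType.

Definition is_subfield (K : F -> Prop) : Prop :=
  [/\ K 0, K 1, (forall x y, K x -> K y -> K (x - y)),
      (forall x y, K x -> K y -> K (x * y)) & (forall x, K x -> K x^-1)].

Definition genfield (S : F -> Prop) : F -> Prop :=
  fun z => forall K, is_subfield K -> (forall x, S x -> K x) -> K z.

Definition adjoin (K : F -> Prop) (k : nat) (a : 'I_k -> F) : F -> Prop :=
  genfield (fun x => K x \/ exists i, a i = x).

(* P is a finitely generated field extension of Q inside F (the prime field
   of a subfield of a characteristic-0 field is Q) *)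
Definition fg_field (P : F -> Prop) : Prop :=
  is_subfield P /\
  exists (n : nat) (g : 'I_n -> F),
    forall z, P z <-> genfield (fun x => exists i, g i = x) z.

Definition mult_indep (k : nat) (c : 'I_k -> F) : Prop :=
  forall n : 'I_k -> int, \prod_(i < k) c i ^ n i = 1 -> forall i, n i = 0.

Definition in_mgroup (k : nat) (c : 'I_k -> F) (x : F) : Prop :=
  exists n : 'I_k -> int, x = \prod_(i < k) c i ^ n i.

Definition pure_in (K : F -> Prop) (k : nat) (c : 'I_k -> F) : Prop :=
  forall (x : F) (m : nat), in_mgroup c x -> (0 < m)%N ->
    (exists y, [/\ K y, y != 0 & y ^+ m = x]) ->
    exists z, in_mgroup c z /\ z ^+ m = x.

Definition simple_in (K : F -> Prop) (k : nat) (c : 'I_k -> F) : Prop :=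
  [/\ forall i, K (c i) /\ c i != 0, mult_indep c & pure_in K c].
End Defs.

(* Main.v *)
Require Import Defs.
From mathcomp Require Import all_boot all_order all_algebra.
From mathcomp Require Import complex reals.
Import Order.TTheory GRing.Theory Num.Theory.
Local Open Scope ring_scope.
Local Open Scope complex_scope.

Set Implicit Arguments.
Section Helpers.
Variable F : fieldType.

Lemma indep_eq (k : nat) (c : 'I_k -> F) (u v : 'I_k -> int) :
  (forall i, c i != 0) -> mult_indep c ->
  \prod_(i < k) c i ^ u i = \prod_(i < k) c i ^ v i -> forall i, u i = v i.
Proof.
move=> nz ind E i; apply/eqP; rewrite -subr_eq0; apply/eqP.
apply: (ind (fun i => u i - v i)) => //.
have Hv : \prod_(i < k) c i ^ v i != 0.
  by apply/prodf_neq0 => j _; rewrite expfz_neq0.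
apply: (mulIf Hv); rewrite mul1r -{2}E -big_split /=.
by apply: eq_bigr => j _; rewrite -exprzDr ?subrK // unitfE.
Qed.

Definition ext (r : nat) (n : 'I_r -> int) : 'I_r.+1 -> int :=
  fun j => match unlift ord_max j with Some i => n i | None => 0 end.

#[global] Arguments ext {r} n j.

Lemma ext_widen r (n : 'I_r -> int) i : ext n (widen_ord (leqnSn r) i) = n i.
Proof.
have -> : widen_ord (leqnSn r) i = lift ord_max i by by apply/val_inj; rewrite /= /bump leqNgt ltn_ord.
by rewrite /ext liftK.
Qed.

Lemma ext_max r (n : 'I_r -> int) : ext n ord_max = 0.
Proof. by rewrite /ext unlift_none. Qed.

Lemma prod_ext r (c : 'I_r.+1 -> F) (n : 'I_r -> int) :
  \prod_(i < r.+1) c i ^ ext n i =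
  \prod_(i < r) c (widen_ord (leqnSn r) i) ^ n i.
Proof.
rewrite big_ord_recr /= ext_max expr0z mulr1.
by apply: eq_bigr => i _; rewrite ext_widen.
Qed.

Lemma genfield_mono (S T : F -> Prop) :
  (forall x, S x -> T x) -> forall z, genfield S z -> genfield T z.
Proof. by move=> ST z Hz K HK HT; apply: Hz => // x /ST; apply: HT. Qed.

Lemma genfield_base (S : F -> Prop) x : S x -> genfield S x.
Proof. by move=> Sx K _ HS; apply: HS. Qed.

End Helpers.
Unset Implicit Arguments.

Theorem lemma2p5 (R : realType) (P : R[i] -> Prop) (r : nat)
    (a : 'I_r.+1 -> R[i]) :
  fg_field P ->
  (forall i, a i != 0) ->
  simple_in (adjoin P a) a ->
  simple_in (adjoin P (fun i : 'I_r => a (widen_ord (leqnSn r) i)))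
            (fun i : 'I_r => a (widen_ord (leqnSn r) i)).
Proof.
move=> _ nz [_ ind pure].
set a' := fun i : 'I_r => a (widen_ord (leqnSn r) i).
have sub : forall z, adjoin P a' z -> adjoin P a z.
  apply: genfield_mono => x [Px|[i <-]]; [by left| by right; exists (widen_ord (leqnSn r) i)].
split.
- move=> i; split; last exact: nz.
  by apply: genfield_base; right; exists i.
- move=> n E i.
  have H := @indep_eq _ _ _ (ext n) (fun _ => 0) nz ind.
  rewrite -(ext_widen n i); apply: H.
  by rewrite prod_ext E big1 // => j _; rewrite expr0z.
- move=> x m [n Ex] m0 [y [Py y0 Ey]].
  have [||z [[k Ez] Hz]] := pure x m _ m0.
  + by exists (ext n); rewrite prod_ext.
  + by exists y; split => //; apply: sub.
  have Hk : forall i, k i * m%:Z = ext n i.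
    apply: (@indep_eq _ _ _ (fun i => k i * m%:Z) (ext n) nz ind).
    rewrite prod_ext -Ex -Hz Ez -prodrXl.
    by apply: eq_bigr => i _; rewrite -exprz_exp.
  have km : k ord_max = 0.
    move: (Hk ord_max); rewrite ext_max => /eqP; rewrite mulf_eq0 => /orP[/eqP //|].
    by move=> /eqP[] mz; rewrite mz in m0.
  exists z; split => //; exists (fun i => k (widen_ord (leqnSn r) i)).
  by rewrite Ez big_ord_recr /= km expr0z mulr1.
Qed.
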